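(* Let $\mathcal{G}=(V,L)$ be a finite connected undirected graph with monitor set $M$ and non-monitor set $N=V\setminus M$, $\sigma=|N|$, and let $P$ be a given set of measurement paths between monitors (Uncontrollable Probing). Let $S\subseteq N$. Then: (a) if $k\le\sigma-1$ and $\mathrm{MSC}(v)\ge k+1$ for every $v\in S$, then $S$ is $k$-identifiable; (b) if $k\le\sigma$ and $S$ is $k$-identifiable, then $\mathrm{MSC}(v)\ge k$ for every $v\in S$.
   Context: Here $k\ge1$ is an integer. Failure model: a failure set is any $F\subseteq N$ (monitors never fail); a measurement path fails iff it traverses a node of $F$. For $F\subseteq N$, $P_F$ is the set of paths in $P$ traversing at least one node of $F$; $F_1,F_2$ are distinguishable iff $P_{F_1}\ne P_{F_2}$. $S\subseteq N$ is $k$-identifiable if any two failure sets $F_1,F_2$ with $|F_1|,|F_2|\le k$ and $F_1\cap S\ne F_2\cap S$ are distinguishable. For $v\in N$, $P_v$ is the set of paths in $P$ traversing $v$. $\mathrm{MSC}(v)$ is the minimum cardinality of a set $V'\subseteq N\setminus\{v\}$ with $P_v\subseteq\bigcup_{w\in V'}P_w$; if no such $V'$ exists (e.g. when $v$ lies on a two-hop measurement path monitor–$v$–monitor), $\mathrm{MSC}(v):=\sigma$. *)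

(* Defs.v *)
From mathcomp Require Import all_boot.
Set Implicit Arguments. Unset Strict Implicit. Unset Printing Implicit Defensive.

Section Tomography.
Variable T : finType.

Definition simple_graph (e : rel T) : Prop := irreflexive e /\ symmetric e.
Definition connected_graph (e : rel T) : Prop := forall x y : T, connect e x y.

Definition measurement_path (e : rel T) (M : {set T}) (p : seq T) : Prop :=
  match p with
  | x :: q => [/\ 1 <= size q, uniq p, path e x q, x \in M & last x q \in M]
  | [::] => False
  end.

Definition nonmon (M : {set T}) : {set T} := ~: M.
Definition sigma (M : {set T}) : nat := #|nonmon M|.

Definition paths_through (P : seq (seq T)) (F : {set T}) : seq (seq T) :=
  [seq p <- P | has (fun x => x \in F) p].

Definition paths_v (P : seq (seq T)) (v : T) : seq (seq T) :=
  [seq p <- P | v \in p].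

Definition distinguishable (P : seq (seq T)) (F1 F2 : {set T}) : Prop :=
  paths_through P F1 <> paths_through P F2.

Definition k_identifiable (M : {set T}) (P : seq (seq T)) (k : nat) (S : {set T}) : Prop :=
  forall F1 F2 : {set T}, F1 \subset nonmon M -> F2 \subset nonmon M ->
    #|F1| <= k -> #|F2| <= k -> F1 :&: S != F2 :&: S ->
    distinguishable P F1 F2.

Definition msc_cover (M : {set T}) (P : seq (seq T)) (v : T) (V' : {set T}) : bool :=
  (V' \subset nonmon M :\ v) &&
  all (fun p => has (fun w => p \in paths_v P w) (enum V')) (paths_v P v).

Definition MSC (M : {set T}) (P : seq (seq T)) (v : T) : nat :=
  if [exists V' : {set T}, msc_cover M P v V']
  then \big[minn/sigma M]_(V' : {set T} | msc_cover M P v V') #|V'|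
  else sigma M.

End Tomography.

(* Main.v *)
Require Import Defs.
From mathcomp Require Import all_boot.

Lemma dist_of (T : finType) (P : seq (seq T)) (F1 F2 : {set T}) p :
  p \in P -> has (fun x => x \in F1) p -> ~~ has (fun x => x \in F2) p ->
  distinguishable P F1 F2.
Proof.
move=> pP h1 h2 E.
have : p \in paths_through P F1 by rewrite /paths_through mem_filter h1 pP.
by rewrite E /paths_through mem_filter (negbTE h2).
Qed.

Arguments dist_of {T P F1 F2 p}.

Lemma bigmin_le (I : eqType) (r : seq I) (F : I -> nat) s j :
  j \in r -> \big[minn/s]_(i <- r) F i <= F j.
Proof.
elim: r => //= a r IH; rewrite inE big_cons => /orP [/eqP -> | jr].
  exact: geq_minl.
exact: leq_trans (geq_minr _ _) (IH jr).
Qed.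

Lemma msc_le (T : finType) M P (v : T) V' :
  msc_cover M P v V' -> MSC M P v <= #|V'|.
Proof.
move=> hc; rewrite /MSC.
have -> : [exists V' : {set T}, msc_cover M P v V'] by apply/existsP; exists V'.
rewrite /= -big_filter; apply: bigmin_le; by rewrite mem_filter hc mem_index_enum.
Qed.

Arguments msc_le {T M P v V'}.

Lemma core (T : finType) M P (S F1 F2 : {set T}) k (v : T) :
  v \in F1 -> v \notin F2 -> F2 \subset nonmon M -> #|F2| <= k ->
  k + 1 <= MSC M P v -> distinguishable P F1 F2.
Proof.
move=> v1 v2 F2N F2k hm.
case hb: (has (fun p => ~~ has (fun x => x \in F2) p) (paths_v P v)).
  move/hasP: hb => [p]; rewrite /paths_v mem_filter => /andP [vp pP] hn.
  apply: (dist_of pP _ hn); apply/hasP; by exists v.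
exfalso.
have hc : msc_cover M P v F2.
  rewrite /msc_cover; apply/andP; split.
    apply/subsetP => x xF; rewrite in_setD1 (subsetP F2N _ xF) andbT.
    by apply: contraNneq v2 => <-.
  apply/allP => p pin; move/hasPn: hb => /(_ p pin); rewrite negbK => /hasP [w wp wF].
  move: pin; rewrite /paths_v mem_filter => /andP [_ pP].
  apply/hasP; exists w; first by rewrite mem_enum.
  by rewrite mem_filter wp pP.
have := msc_le hc.
move: hm; rewrite addn1 => hm h.
have := leq_trans hm (leq_trans h F2k); by rewrite ltnn.
Qed.

Arguments core {T M P S F1 F2 k v}.

Theorem theorem3 (T : finType) (e : rel T) (M : {set T}) (P : seq (seq T))
  (S : {set T}) (k : nat) :
  simple_graph e -> connected_graph e ->
  (forall p, p \in P -> measurement_path e M p) ->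
  1 <= k ->
  S \subset nonmon M ->
  ((k <= sigma M - 1 -> (forall v, v \in S -> k + 1 <= MSC M P v) ->
      k_identifiable M P k S)
   /\
   (k <= sigma M -> k_identifiable M P k S ->
      forall v, v \in S -> k <= MSC M P v)).
Proof.
move=> _ _ _ k1 SN; split.
  move=> _ hm F1 F2 F1N F2N F1k F2k hne.
  have : ~~ [forall x, (x \in F1 :&: S) == (x \in F2 :&: S)].
    apply: contra hne => /forallP h; apply/eqP/setP => x; exact/eqP.
  move/forallPn => [v]; rewrite !inE.
  case vS: (v \in S); rewrite ?andbT ?andbF //.
  case v1: (v \in F1); case v2: (v \in F2) => //= _.
    by apply: (core (S := S) v1 _ F2N F2k (hm v vS)); rewrite v2.
  move=> E; apply: (core (S := S) (F1 := F2) (F2 := F1) v2 _ F1N F1k (hm v vS)).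
    by rewrite v1.
  by [].
move=> ks hid v vS.
have key : forall V', msc_cover M P v V' -> k <= #|V'|.
  move=> V' /andP [sub hall]; rewrite leqNgt; apply/negP => lt.
  have vN : v \in nonmon M by apply: (subsetP SN).
  have vV : v \notin V' by apply/negP => /(subsetP sub); rewrite !inE eqxx.
  have := hid (v |: V') V'.
  have h1 : v |: V' \subset nonmon M.
    apply/subsetP => x; rewrite !inE => /orP [/eqP -> | xV].
      by move: vN; rewrite inE.
    by move: (subsetP sub x xV); rewrite !inE => /andP [].
  have h2 : V' \subset nonmon M.
    apply/subsetP => x xV; move: (subsetP sub x xV); rewrite !inE => /andP [] //.
  have h3 : #|v |: V'| <= k by rewrite cardsU1 vV add1n.
  have h4 : #|V'| <= k by apply: ltnW.
  have h5 : (v |: V') :&: S != V' :&: S.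
    apply/negP => /eqP /setP /(_ v); rewrite !inE eqxx vS /=.
    by rewrite (negbTE vV).
  move=> /(_ h1 h2 h3 h4 h5); apply.
  apply: eq_in_filter => p pP.
  case hp: (has (fun x => x \in V') p).
    apply/hasP; move/hasP: hp => [w wp wV]; exists w => //; by rewrite inE wV orbT.
  apply/negP => /hasP [w wp]; rewrite !inE => /orP [/eqP ew | wV].
    rewrite ew in wp.
    have pin : p \in paths_v P v by rewrite mem_filter wp pP.
    move/allP: hall => /(_ p pin) /hasP [u uV]; rewrite mem_filter => /andP [up _].
    move/negbT: hp => /hasP; apply; exists u => //; by rewrite mem_enum in uV.
  by move/negbT: hp => /hasP; apply; exists w.
rewrite /MSC; case: ifP => _ //.
elim/big_ind: _ => //.
  by move=> x y hx hy; rewrite leq_min hx hy.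
Qed.
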